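(* Let $\lambda$ be a nonzero real number, $x$ real, and $n\ge0$ an integer. Then $$\beta_{n,\lambda}(x)=\sum_{k=0}^{n}k!\,S_{2,\lambda}(n,k)\sum_{j=0}^{k}\binom{x}{j}\frac{\lambda^{k-j}}{(k-j+1)!}(1)_{k-j+1,\frac{1}{\lambda}}.$$ In particular, for $x=0$, $$\beta_{n,\lambda}=\sum_{k=0}^{n}k!\,S_{2,\lambda}(n,k)\frac{\lambda^{k}}{(k+1)!}(1)_{k+1,\frac{1}{\lambda}}.$$
   Context: For real $y$, $\mu\neq 0$ and integer $k\ge0$: $(y)_{0,\mu}=1$, $(y)_{k,\mu}=y(y-\mu)\cdots(y-(k-1)\mu)$ (used with $\mu=\lambda$ and $\mu=1/\lambda$); $(y)_0=1$, $(y)_k=y(y-1)\cdots(y-k+1)$. The degenerate exponential is $e_\lambda^x(t)=\sum_{k\ge0}(x)_{k,\lambda}t^k/k!=(1+\lambda t)^{x/\lambda}$, $e_\lambda(t)=e^1_\lambda(t)$. The degenerate Bernoulli polynomials are defined by $\frac{t}{e_\lambda(t)-1}e_\lambda^x(t)=\sum_{n\ge0}\beta_{n,\lambda}(x)\frac{t^n}{n!}$, and $\beta_{n,\lambda}=\beta_{n,\lambda}(0)$. The degenerate Stirling numbers of the second kind are defined by $(x)_{n,\lambda}=\sum_{k=0}^{n}S_{2,\lambda}(n,k)(x)_{k}$ ($n\ge0$). *)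

(* Defs.v *)
From HB Require Import structures.
From mathcomp Require Import all_boot all_order all_algebra.
From mathcomp Require Import reals.
Set Implicit Arguments. Unset Strict Implicit. Unset Printing Implicit Defensive.
Import Order.TTheory GRing.Theory Num.Theory.
Local Open Scope ring_scope.

Definition dfall {R : realType} (mu y : R) (k : nat) : R :=
  \prod_(i < k) (y - i%:R * mu).

Definition fall {R : realType} (y : R) (k : nat) : R :=
  \prod_(i < k) (y - i%:R).

Definition binomR {R : realType} (x : R) (j : nat) : R := fall x j / (j`!)%:R.

(* Ordinary coefficients of e_lam(t) - 1 = sum_{m>=1} (1)_{m,lam} t^m / m! *)
Definition egm1_coef {R : realType} (lam : R) (m : nat) : R :=
  if m is 0 then 0 else dfall lam 1 m / (m`!)%:R.

(* Ordinary coefficients of t * e_lam^x(t) = sum_{n>=0} (x)_{n,lam} t^(n+1) / n! *)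
Definition tex_coef {R : realType} (lam x : R) (n : nat) : R :=
  if n is n'.+1 then dfall lam x n' / (n'`!)%:R else 0.

(* b is the sequence of degenerate Bernoulli polynomials beta_{n,lam}(x), i.e.
   t/(e_lam(t)-1) e_lam^x(t) = sum_n b n t^n/n! as formal power series,
   written (since e_lam(t)-1 = t * unit) in the equivalent multiplied-out form
   (e_lam(t)-1) * sum_n b n t^n/n! = t e_lam^x(t), coefficientwise. *)
Definition is_degBernoulli {R : realType} (lam x : R) (b : nat -> R) : Prop :=
  forall n : nat,
    \sum_(i < n.+1) egm1_coef lam (n - i) * (b i / (i`!)%:R) = tex_coef lam x n.

Definition is_degStirling2 {R : realType} (lam : R) (S2 : nat -> nat -> R) : Prop :=
  forall (n : nat) (x : R), dfall lam x n = \sum_(k < n.+1) S2 n k * fall x k.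

(* Main.v *)
Require Import Defs.
From HB Require Import structures.
From mathcomp Require Import all_boot all_order all_algebra.
From mathcomp Require Import reals.
From mathcomp Require Import ring lra zify.
Import Order.TTheory GRing.Theory Num.Theory.
Local Open Scope ring_scope.


Lemma sum_widen {R : nmodType} (a b : nat) (F : nat -> R) :
  (a <= b)%N -> (forall i, (a <= i)%N -> (i < b)%N -> F i = 0) ->
  \sum_(i < a) F i = \sum_(i < b) F i.
Proof.
move=> ab hF; rewrite -!(big_mkord xpredT) [RHS](big_cat_nat (n:=a)) //=.
rewrite [X in _ + X]big1_seq ?addr0 // => i; rewrite mem_index_iota => /andP[_ /andP[h1 h2]].
exact: hF.
Qed.

Definition eqm {R : nzRingType} (N : nat) (p q : {poly R}) :=
  forall i, (i <= N)%N -> p`_i = q`_i.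

Lemma eqm_mul {R : nzRingType} {N} {p p' q q' : {poly R}} :
  eqm N p p' -> eqm N q q' -> eqm N (p * q) (p' * q').
Proof.
move=> hp hq i iN; rewrite !coefM; apply: eq_bigr => j _.
have ji : (j <= i)%N by rewrite -ltnS.
rewrite hp ?hq //; [exact: leq_trans (leq_subr _ _) iN | exact: leq_trans ji iN].
Qed.

Lemma eqm_trans {R : nzRingType} {N} {p q r : {poly R}} :
  eqm N p q -> eqm N q r -> eqm N p r.
Proof. by move=> h1 h2 i iN; rewrite h1 // h2. Qed.

Lemma eqm_sym {R : nzRingType} {N} {p q : {poly R}} : eqm N p q -> eqm N q p.
Proof. by move=> h i iN; rewrite h. Qed.

Lemma coef_exp_small {R : comNzRingType} (U : {poly R}) k i :
  U`_0 = 0 -> (i < k)%N -> (U ^+ k)`_i = 0.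
Proof.
move=> U0; elim: k i => [//|k IH] i ik.
rewrite exprS coefM big1 // => -[[|j'] hj] _ /=; first by rewrite U0 mul0r.
rewrite IH ?mulr0 //; move: ik hj; clear; lia.
Qed.

Lemma coef_comp_small {R : comNzRingType} (P U : {poly R}) l :
  U`_0 = 0 -> (P \Po U)`_l = \sum_(i < l.+1) P`_i * (U ^+ i)`_l.
Proof.
move=> U0; rewrite coef_comp_poly.
rewrite (@sum_widen _ (size P) (size P + l.+1) (fun i => P`_i * (U ^+ i)`_l)); last 2 first.
- exact: leq_addr.
- by move=> i hi _; rewrite nth_default ?mul0r.
rewrite -(@sum_widen _ l.+1 (size P + l.+1) (fun i => P`_i * (U ^+ i)`_l)) //.
- exact: leq_addl.
- by move=> i hi _; rewrite coef_exp_small ?mulr0.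
Qed.

Lemma eqm_comp {R : comNzRingType} {N} {P Q U : {poly R}} :
  U`_0 = 0 -> eqm N P Q -> eqm N (P \Po U) (Q \Po U).
Proof.
move=> U0 h l lN; rewrite !coef_comp_small //; apply: eq_bigr => i _.
rewrite h //; apply: leq_trans lN; by rewrite -ltnS.
Qed.


Lemma dfall0 {R : realType} (mu y : R) : dfall mu y 0 = 1.
Proof. by rewrite /dfall big_ord0. Qed.

Lemma dfallS {R : realType} (mu y : R) k : dfall mu y k.+1 = dfall mu y k * (y - k%:R * mu).
Proof. by rewrite /dfall big_ord_recr. Qed.

Lemma fall0 {R : realType} (y : R) : fall y 0 = 1.
Proof. by rewrite /fall big_ord0. Qed.

Lemma fallS {R : realType} (y : R) k : fall y k.+1 = fall y k * (y - k%:R).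
Proof. by rewrite /fall big_ord_recr. Qed.

Lemma fallS1 {R : realType} (y : R) k : fall (y + 1) k.+1 = (y + 1) * fall y k.
Proof.
rewrite /fall big_ord_recl subr0; congr (_ * _); apply: eq_bigr => i _.
rewrite lift0 -natr1; ring.
Qed.

Lemma bump0 i : bump 0 i = i.+1. Proof. by []. Qed.

Lemma dfallD {R : realType} (lam a b : R) n :
  dfall lam (a + b) n = \sum_(i < n.+1) 'C(n, i)%:R * dfall lam a i * dfall lam b (n - i).
Proof.
elim: n => [|n IH]; first by rewrite big_ord1 !dfall0 bin0 mulr1 mul1r.
rewrite dfallS IH big_distrl /=.
transitivity (\sum_(i < n.+1) ('C(n, i)%:R * dfall lam a i.+1 * dfall lam b (n - i)
   + 'C(n, i)%:R * dfall lam a i * dfall lam b (n.+1 - i))).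
  apply: eq_bigr => -[i hi] _ /=.
  have hin : (i <= n)%N by rewrite -ltnS.
  rewrite (subSn hin) !dfallS.
  have -> : (n%:R : R) = i%:R + (n - i)%:R by rewrite -natrD subnKC.
  ring.
rewrite big_split /= [in RHS]big_ord_recl /= bin0 subn0 dfall0 !mul1r.
under [in RHS]eq_bigr => i _ do rewrite bump0 binS natrD subSS !mulrDl.
rewrite big_split /= [RHS]addrA [RHS]addrC; congr (_ + _).
rewrite big_ord_recl /= bin0 subn0 dfall0 !mul1r; congr (_ + _).
rewrite big_ord_recr /= bin_small // mul0r mul0r addr0.
by apply: eq_bigr => i _; rewrite bump0 subSS.
Qed.


Definition EP {R : realType} (lam : R) N (y : R) : {poly R} :=
  \poly_(i < N.+1) (dfall lam y i / (i`!)%:R).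
Definition BP {R : realType} N (y : R) : {poly R} := \poly_(i < N.+1) binomR y i.
Definition UU {R : realType} (lam : R) N := EP lam N 1 - 1.

Lemma fact_neq0 (R : realType) n : ((n`!)%:R : R) != 0.
Proof. by rewrite pnatr_eq0 -lt0n fact_gt0. Qed.

Lemma UU0 {R : realType} (lam : R) N : (UU lam N)`_0 = 0.
Proof. by rewrite coefB coef_poly /= coefC /= dfall0 divr1 subrr. Qed.

Lemma EP_mul {R : realType} (lam a b : R) N :
  eqm N (EP lam N a * EP lam N b) (EP lam N (a + b)).
Proof.
move=> i iN; rewrite coefM coef_poly ltnS iN dfallD big_distrl /=.
apply: eq_bigr => -[j hj] _ /=.
have ji : (j <= i)%N by rewrite -ltnS.
rewrite !coef_poly ltnS (leq_trans ji iN) ltnS (leq_trans (leq_subr _ _) iN).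
rewrite -(bin_fact ji) !natrM.
have hC : ('C(i, j)%:R : R) != 0 by rewrite pnatr_eq0 -lt0n bin_gt0.
have h1 := fact_neq0 R j; have h2 := fact_neq0 R (i - j).
field; rewrite ?h1 ?h2 ?hC //.
Qed.

Lemma EP0 {R : realType} (lam : R) N : eqm N (EP lam N 0) 1.
Proof.
move=> [|i] iN; rewrite coef_poly ltnS iN coefC /=; first by rewrite dfall0 divr1.
by rewrite /dfall big_ord_recl /= mul0r subr0 mul0r mul0r.
Qed.

Lemma BP0 {R : realType} N : eqm N (BP N (0 : R)) 1.
Proof.
move=> [|i] iN; rewrite coef_poly ltnS iN coefC /= /binomR; first by rewrite fall0 divr1.
by rewrite /fall big_ord_recl /= subrr mul0r mul0r.
Qed.

Lemma BP_succ {R : realType} N (y : R) : eqm N (BP N (y + 1)) (BP N y * (1 + 'X)).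
Proof.
move=> [|k] iN; rewrite mulrDr mulr1 coefD coefMX !coef_poly /=.
  by rewrite /binomR !fall0 addr0.
rewrite ltnS iN ltnS (ltnW iN) /binomR fallS1 fallS factS natrM.
have h1 := fact_neq0 R k.
have h2 : (k.+1%:R : R) != 0 by rewrite pnatr_eq0.
rewrite -natr1; field; rewrite ?h1 //; rewrite natr1 h2 //.
Qed.


Lemma E_nat {R : realType} (lam : R) N m :
  eqm N (EP lam N m%:R) (BP N m%:R \Po UU lam N).
Proof.
elim: m => [|m IH]; first rewrite (_ : (0%:R : R) = 0) //.
  apply: eqm_trans (EP0 lam N) _; apply: eqm_sym.
  apply: eqm_trans (eqm_comp (UU0 lam N) (BP0 N)) _.
  by rewrite -polyC1 comp_polyC.
rewrite -natr1.
apply: eqm_trans (eqm_sym (EP_mul lam _ _ N)) _.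
have -> : EP lam N 1 = 1 + UU lam N by rewrite /UU addrC subrK.
apply: eqm_trans (eqm_mul IH (fun i _ => erefl)) _.
apply: eqm_sym; apply: eqm_trans (eqm_comp (UU0 lam N) (BP_succ N _)) _.
rewrite comp_polyM comp_polyD comp_polyX -polyC1 comp_polyC.
by move=> i _.
Qed.

Lemma fall_nat {R : realType} m k : fall (m%:R : R) k = (m ^_ k)%:R.
Proof.
elim: k => [|k IH]; first by rewrite fall0 ffactn0.
rewrite fallS ffactnSr IH natrM.
case: (leqP k m) => hk; first by rewrite natrB.
by rewrite ffact_small // !mul0r.
Qed.

Lemma S_lemma {R : realType} (lam : R) (S2 : nat -> nat -> R)
  (hS2 : is_degStirling2 lam S2) N l k :
  (l <= N)%N -> (k <= l)%N ->
  ((UU lam N) ^+ k)`_l = (k`!)%:R * (S2 l k / (l`!)%:R).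
Proof.
move=> lN.
pose d k := ((UU lam N) ^+ k)`_l / (k`!)%:R - S2 l k / (l`!)%:R.
have fact1 : forall m : nat, \sum_(k < l.+1) fall (m%:R : R) k * d k = 0.
  move=> m.
  under eq_bigr => i _ do rewrite /d mulrBr.
  rewrite sumrB; apply/eqP; rewrite subr_eq0; apply/eqP.
  have := E_nat lam N m l lN; rewrite coef_comp_small ?UU0 // coef_poly ltnS lN.
  rewrite hS2 big_distrl /= => h.
  transitivity (\sum_(i < l.+1) (BP N m%:R)`_i * (UU lam N ^+ i)`_l); last first.
    rewrite -h; apply: eq_bigr => i _; by rewrite [RHS]mulrA [fall _ _ * _]mulrC.
  apply: eq_bigr => -[i hi] _ /=.
  have il : (i <= N)%N by apply: leq_trans lN; rewrite -ltnS.
  rewrite coef_poly ltnS il /binomR. by rewrite mulrA mulrAC.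
have main : forall m k, (k < m)%N -> (k <= l)%N -> d k = 0.
  elim=> [//|m IH] k0; rewrite ltnS leq_eqVlt => /orP[/eqP -> ml|]; last exact: IH.
  have := fact1 m.
  rewrite (bigD1 (Ordinal (ml : (m < l.+1)%N))) //= big1 ?addr0.
    by rewrite fall_nat ffactnn => /eqP; rewrite mulf_eq0 (negbTE (fact_neq0 _ _)) => /eqP.
  move=> [i hi] /= hne.
  have : (i != m)%N by apply: contra hne => /eqP hh; apply/eqP; apply: val_inj.
  rewrite neq_ltn => /orP[him|hmi]; first by rewrite IH ?mulr0 // -ltnS.
  by rewrite fall_nat ffact_small // mul0r.
move=> kl; have := main k.+1 k (ltnSn k) kl; rewrite /d => /eqP; rewrite subr_eq0 => /eqP <-.
have := fact_neq0 R k => h; field; exact: h.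
Qed.

Lemma K_lemma {R : realType} (lam : R) (S2 : nat -> nat -> R)
  (hS2 : is_degStirling2 lam S2) N x :
  eqm N (BP N x \Po UU lam N) (EP lam N x).
Proof.
move=> l lN; rewrite coef_comp_small ?UU0 // coef_poly ltnS lN hS2 big_distrl /=.
apply: eq_bigr => -[i hi] _ /=.
have il : (i <= l)%N by rewrite -ltnS.
rewrite coef_poly ltnS (leq_trans il lN) (S_lemma lam S2 hS2 N l i lN il) /binomR.
have := fact_neq0 R i => h; field; by rewrite h fact_neq0.
Qed.

Definition WP {R : realType} (lam : R) N : {poly R} :=
  \poly_(m < N.+1) (lam ^+ m / ((m.+1)`!)%:R * dfall lam^-1 1 m.+1).

Lemma lam_dfall {R : realType} (lam : R) n : lam != 0 ->
  lam ^+ n * dfall lam^-1 1 n = fall lam n.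
Proof.
move=> hl; elim: n => [|n IH]; first by rewrite expr0 dfall0 fall0 mulr1.
rewrite exprSr dfallS fallS -IH; field; exact: hl.
Qed.

Lemma dfall_lam_lam {R : realType} (lam : R) k : dfall lam lam k.+2 = 0.
Proof.
by rewrite /dfall big_ord_recl big_ord_recl /= (_ : bump 0 0 = 1) // mul1r subrr !mul0r mulr0.
Qed.

Lemma W_lemma {R : realType} (lam : R) (S2 : nat -> nat -> R)
  (hS2 : is_degStirling2 lam S2) N : lam != 0 ->
  eqm N ((WP lam N \Po UU lam N) * UU lam N) 'X.
Proof.
move=> hl i iN.
rewrite -[UU lam N in X in _ * X]comp_polyX -comp_polyM.
apply: (mulfI hl).
have h1 : eqm N (lam *: (WP lam N * 'X)) (BP N lam - 1).
  move=> [|k] kN; rewrite coefZ coefMX coefB !coef_poly coefC /=.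
    by rewrite /binomR fall0 divr1 subrr mulr0.
  have e1 : (k < N.+1)%N by rewrite ltnS ltnW.
  rewrite e1 (_ : (k.+1 < N.+1)%N = true) // subr0 /binomR -(lam_dfall lam k.+1 hl) factS natrM.
  have := fact_neq0 R k => hk.
  have hk1 : (k.+1%:R : R) != 0 by rewrite pnatr_eq0.
  rewrite exprS; field; by rewrite hk addrC natr1 hk1.
rewrite -coefZ -comp_polyZ (eqm_comp (UU0 lam N) h1 i iN) comp_polyB -polyC1 comp_polyC.
rewrite coefB (K_lemma lam S2 hS2 N lam i iN) coef_poly ltnS iN coefC coefX.
case: i iN => [|[|k]] iN /=.
- by rewrite dfall0 divr1 subrr mulr0.
- by rewrite /dfall big_ord1 /= mul0r subr0 divr1 subr0 mulr1.
- by rewrite dfall_lam_lam mul0r subr0 mulr0.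
Qed.

Definition acoef {R : realType} (lam x : R) (k : nat) : R :=
  \sum_(j < k.+1) binomR x j * (lam ^+ (k - j) / (((k - j).+1)`!)%:R)
                        * dfall lam^-1 1 (k - j).+1.

Definition ccoef {R : realType} (lam x : R) (S2 : nat -> nat -> R) (n : nat) : R :=
  \sum_(k < n.+1) (k`!)%:R * S2 n k * acoef lam x k.

Lemma c_rec {R : realType} (lam : R) (hl : lam != 0) (S2 : nat -> nat -> R)
  (hS2 : is_degStirling2 lam S2) (x : R) n :
  \sum_(i < n.+1) egm1_coef lam (n - i) * (ccoef lam x S2 i / (i`!)%:R) = tex_coef lam x n.
Proof.
pose U := UU lam n.
pose A := (BP n x * WP lam n) \Po U.
have hA : forall i, (i <= n)%N -> ccoef lam x S2 i / (i`!)%:R = A`_i.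
  move=> i iN; rewrite coef_comp_small ?UU0 // /ccoef big_distrl /=.
  apply: eq_bigr => -[k hk] _ /=.
  have ki : (k <= i)%N by rewrite -ltnS.
  rewrite (S_lemma lam S2 hS2 n i k iN ki) coefM /acoef.
  have -> : \sum_(j < k.+1) (BP n x)`_j * (WP lam n)`_(k - j) =
     \sum_(j < k.+1) binomR x j * (lam ^+ (k - j) / (((k - j).+1)`!)%:R)
                        * dfall lam^-1 1 (k - j).+1.
    apply: eq_bigr => -[j hj] _ /=.
    have jk : (j <= k)%N by rewrite -ltnS.
    rewrite !coef_poly ltnS (leq_trans jk (leq_trans ki iN)).
    by rewrite ltnS (leq_trans (leq_subr _ _) (leq_trans ki iN)) [LHS]mulrA.
  rewrite /U; ring.
have hU : forall m, (m <= n)%N -> egm1_coef lam m = U`_m.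
  move=> [|m] mN; rewrite /U coefB coef_poly ltnS mN coefC //=.
  by rewrite dfall0 divr1 subrr.
  by rewrite subr0.
transitivity ((A * U)`_n).
  rewrite coefM; apply: eq_bigr => -[i hi] _ /=.
  have iN : (i <= n)%N by rewrite -ltnS.
  by rewrite hA // hU ?leq_subr // mulrC.
rewrite /A comp_polyM -mulrA.
rewrite (eqm_mul (K_lemma lam S2 hS2 n x) (W_lemma lam S2 hS2 n hl) n (leqnn n)).
rewrite coefMX; case: n {U A hA hU} => [//|n] /=.
by rewrite coef_poly ltnS leqnSn.
Qed.

Lemma uniq_rec {R : realType} (lam x : R) (b b' : nat -> R) :
  is_degBernoulli lam x b -> is_degBernoulli lam x b' -> forall n, b n = b' n.
Proof.
move=> hb hb'.
have key : forall n, (forall i, (i < n)%N -> b i = b' i) -> b n = b' n.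
  move=> n IH.
  have e1 := hb n.+1; have e2 := hb' n.+1.
  rewrite big_ord_recr /= subnn big_ord_recr /= subSnn in e1.
  rewrite big_ord_recr /= subnn big_ord_recr /= subSnn in e2.
  have hs : \sum_(i < n) egm1_coef lam (n.+1 - i) * (b i / (i`!)%:R) =
            \sum_(i < n) egm1_coef lam (n.+1 - i) * (b' i / (i`!)%:R).
    by apply: eq_bigr => -[i hi] _ /=; rewrite IH.
  rewrite hs -e2 in e1.
  have h1 : egm1_coef lam 1 = 1 by rewrite /egm1_coef /dfall big_ord1 /= mul0r subr0 divr1.
  move: e1; rewrite h1 /= !mul1r !mul0r !addr0.
  set S := \sum_(i < n) _ => e1.
  have h : b n / (n`!)%:R = b' n / (n`!)%:R.
    by have := congr1 (fun z => - S + z) e1; rewrite /= !addKr.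
  by have := congr1 (fun z => z * (n`!)%:R) h; rewrite /= !divfK ?fact_neq0.
elim/ltn_ind => n IH; exact: key.
Qed.

Theorem theorem7 (R : realType) (lam : R) (hlam : lam != 0)
  (beta : R -> nat -> R) (S2 : nat -> nat -> R)
  (hbeta : forall x : R, is_degBernoulli lam x (beta x))
  (hS2 : is_degStirling2 lam S2) :
  (forall (x : R) (n : nat),
     beta x n = \sum_(k < n.+1) (k`!)%:R * S2 n k *
        \sum_(j < k.+1) binomR x j * (lam ^+ (k - j) / (((k - j).+1)`!)%:R)
                        * dfall lam^-1 1 (k - j).+1)
  /\
  (forall n : nat,
     beta 0 n = \sum_(k < n.+1) (k`!)%:R * S2 n k *
        (lam ^+ k / ((k.+1)`!)%:R) * dfall lam^-1 1 k.+1).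
Proof.
have P1 : forall (x : R) (n : nat),
     beta x n = \sum_(k < n.+1) (k`!)%:R * S2 n k *
        \sum_(j < k.+1) binomR x j * (lam ^+ (k - j) / (((k - j).+1)`!)%:R)
                        * dfall lam^-1 1 (k - j).+1.
  move=> x n.
  exact: (uniq_rec lam x _ _ (hbeta x) (fun m => c_rec lam hlam S2 hS2 x m) n).
split; first exact: P1.
move=> n; rewrite P1; apply: eq_bigr => k _.
rewrite big_ord_recl /= big1 ?addr0.
  by rewrite subn0 /binomR fall0 divr1 mul1r mulrA.
move=> j _; rewrite /binomR /fall big_ord_recl /= subrr !mul0r //.
Qed.
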